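(* Let $\theta\colon H\to G$ be a coherent continuous covering functor between Boolean groupoids. Suppose in addition that the image $\theta(H)$ is an invariant subset of $G$ and that $\theta$ is a homeomorphism from $H$ onto $\theta(H)$ (with the subspace topology). Then the map $\mathsf{KB}(G)\to\mathsf{KB}(H)$, $A\mapsto\theta^{-1}(A)$, is a surjective weakly meet preserving morphism of Boolean inverse semigroups.
   Context: A Boolean groupoid is an étale topological groupoid whose space of identities is a locally compact Hausdorff $0$-dimensional space. $\mathbf{d}(g)=g^{-1}g$, $\mathbf{r}(g)=gg^{-1}$. Define $g\,\mathcal{D}\,h$ iff there is $x$ with $\mathbf{d}(x)=\mathbf{d}(g)$ and $\mathbf{r}(x)=\mathbf{d}(h)$; a subset of $G$ is invariant if it is a union of $\mathcal{D}$-classes. A functor $\alpha\colon H\to G$ is a covering functor if for each identity $e$ of $H$ it restricts to a bijection $\{h:\mathbf{d}(h)=e\}\to\{g:\mathbf{d}(g)=\alpha(e)\}$; a continuous functor is coherent if inverse images of compact-open sets are compact-open. $\mathsf{KB}(G)$ denotes the Boolean inverse semigroup of compact-open partial bisections (subsets $A$ with $A^{-1}A,AA^{-1}\subseteq G_o$) under subset multiplication. A morphism of Boolean inverse semigroups preserves zero, products and joins of compatible pairs. A morphism $\phi\colon S\to T$ is weakly meet preserving if whenever $t\le\phi(a),\phi(b)$ there is $c\le a,b$ with $t\le\phi(c)$. *)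

(* Defs.v *)
From mathcomp Require Import all_boot.
From mathcomp Require Import classical_sets boolp functions topology.

Set Implicit Arguments.
Unset Strict Implicit.
Unset Printing Implicit Defensive.

Local Open Scope classical_set_scope.

(* Groupoids.  A groupoid on a carrier T is given by total functions   *)
(* dom (= d), cod (= r), inv and mul; the product  mul x y  is only    *)
(* meaningful ("defined") when  dom x = cod y.  The axioms force       *)
(* dom g = g^-1 g and cod g = g g^-1, as in the paper.                 *)
Record gpd_ops (T : Type) := GpdOps {
  gdom : T -> T;
  gcod : T -> T;
  ginv : T -> T;
  gmul : T -> T -> T }.

Definition is_groupoid (T : Type) (G : gpd_ops T) : Prop :=
  [/\ (forall x, gdom G (gdom G x) = gdom G x /\ gcod G (gdom G x) = gdom G x),
      (forall x, gdom G (gcod G x) = gcod G x /\ gcod G (gcod G x) = gcod G x),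
      (forall x y, gdom G x = gcod G y ->
          gdom G (gmul G x y) = gdom G y /\ gcod G (gmul G x y) = gcod G x),
      (forall x y z, gdom G x = gcod G y -> gdom G y = gcod G z ->
          gmul G (gmul G x y) z = gmul G x (gmul G y z)) &
      ((forall x, gmul G (gcod G x) x = x /\ gmul G x (gdom G x) = x) /\
       (forall x, [/\ gdom G (ginv G x) = gcod G x, gcod G (ginv G x) = gdom G x,
                     gmul G (ginv G x) x = gdom G x & gmul G x (ginv G x) = gcod G x]))].

Definition gidents (T : Type) (G : gpd_ops T) : set T := [set e | gdom G e = e].

Definition is_topological_groupoid (T : topologicalType) (G : gpd_ops T) : Prop :=
  [/\ is_groupoid G, continuous (ginv G) &
      {within [set p : T * T | gdom G p.1 = gcod G p.2],
        continuous (fun p : T * T => gmul G p.1 p.2)}].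

Definition local_homeomorphism (T S : topologicalType) (f : T -> S) : Prop :=
  forall x, exists U : set T,
    [/\ open U, U x,
        (forall y z, U y -> U z -> f y = f z -> y = z),
        {within U, continuous f} &
        (forall V : set T, open V -> V `<=` U -> open (f @` V))].

Definition is_etale (T : topologicalType) (G : gpd_ops T) : Prop :=
  is_topological_groupoid G /\ local_homeomorphism (gdom G).

Definition zero_dim (T : topologicalType) : Prop :=
  forall (x : T) (U : set T), open U -> U x ->
    exists V : set T, [/\ clopen V, V x & V `<=` U].

Definition is_boolean_groupoid (T : topologicalType) (G : gpd_ops T) : Prop :=
  [/\ is_etale G,
      locally_compact [set: subspace (gidents G)],
      hausdorff_space (subspace (gidents G)) &
      zero_dim (subspace (gidents G))].

Definition gD (T : Type) (G : gpd_ops T) (g h : T) : Prop :=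
  exists x, gdom G x = gdom G g /\ gcod G x = gdom G h.

Definition gpd_invariant (T : Type) (G : gpd_ops T) (S : set T) : Prop :=
  forall g h, gD G g h -> S g -> S h.

Definition is_functor (U T : Type) (H : gpd_ops U) (G : gpd_ops T) (f : U -> T) :=
  [/\ (forall x, f (gdom H x) = gdom G (f x)),
      (forall x, f (gcod H x) = gcod G (f x)) &
      (forall x y, gdom H x = gcod H y -> f (gmul H x y) = gmul G (f x) (f y))].

Definition is_covering_functor (U T : Type) (H : gpd_ops U) (G : gpd_ops T)
    (f : U -> T) : Prop :=
  is_functor H G f /\
  forall e, gidents H e ->
    (forall h1 h2, gdom H h1 = e -> gdom H h2 = e -> f h1 = f h2 -> h1 = h2) /\
    (forall g, gdom G g = f e -> exists h, gdom H h = e /\ f h = g).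

Definition compact_open (T : topologicalType) (A : set T) : Prop :=
  compact A /\ open A.

Definition coherent (U T : topologicalType) (f : U -> T) : Prop :=
  forall A : set T, compact_open A -> compact_open (f @^-1` A).

Definition homeo_onto_image (U T : topologicalType) (f : U -> T) : Prop :=
  [/\ injective f, continuous f &
      forall V : set U, open V -> exists W : set T, open W /\ f @` V = W `&` range f].

Definition setmul (T : Type) (G : gpd_ops T) (A B : set T) : set T :=
  [set z | exists x y, [/\ A x, B y, gdom G x = gcod G y & z = gmul G x y]].

Definition setinv (T : Type) (G : gpd_ops T) (A : set T) : set T := ginv G @` A.

Definition partial_bisection (T : Type) (G : gpd_ops T) (A : set T) : Prop :=
  setmul G (setinv G A) A `<=` gidents G /\ setmul G A (setinv G A) `<=` gidents G.

Definition inKB (T : topologicalType) (G : gpd_ops T) (A : set T) : Prop :=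
  [/\ compact A, open A & partial_bisection G A].

Definition KBle (T : Type) (G : gpd_ops T) (A B : set T) : Prop :=
  A = setmul G B (setmul G (setinv G A) A).

Definition KBidem (T : Type) (G : gpd_ops T) (A : set T) : Prop :=
  setmul G A A = A.

Definition KBcompatible (T : Type) (G : gpd_ops T) (A B : set T) : Prop :=
  KBidem G (setmul G (setinv G A) B) /\ KBidem G (setmul G A (setinv G B)).

(* phi : KB(G) -> KB(H) (given as a map on subsets) is a morphism of       *)
(* Boolean inverse semigroups: well defined, preserves zero, products and  *)
(* joins of compatible pairs (the join in KB is the union).               *)
Definition KB_morphism (T U : topologicalType) (G : gpd_ops T) (H : gpd_ops U)
    (phi : set T -> set U) : Prop :=
  [/\ (forall A, inKB G A -> inKB H (phi A)),
      phi set0 = set0,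
      (forall A B, inKB G A -> inKB G B ->
          phi (setmul G A B) = setmul H (phi A) (phi B)) &
      (forall A B, inKB G A -> inKB G B -> KBcompatible G A B ->
          phi (A `|` B) = phi A `|` phi B)].

Definition KB_surjective (T U : topologicalType) (G : gpd_ops T) (H : gpd_ops U)
    (phi : set T -> set U) : Prop :=
  forall B, inKB H B -> exists A, inKB G A /\ phi A = B.

Definition KB_weakly_meet_preserving (T U : topologicalType) (G : gpd_ops T)
    (H : gpd_ops U) (phi : set T -> set U) : Prop :=
  forall A B C, inKB G A -> inKB G B -> inKB H C ->
    KBle H C (phi A) -> KBle H C (phi B) ->
    exists D, [/\ inKB G D, KBle G D A, KBle G D B & KBle H C (phi D)].

(* Main.v *)
Require Import Defs.
From mathcomp Require Import all_boot.
From mathcomp Require Import classical_sets boolp functions topology.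
Set Implicit Arguments.
Unset Strict Implicit.
Unset Printing Implicit Defensive.
Local Open Scope classical_set_scope.

Section Alg.
Variables (T : Type) (G : gpd_ops T).
Hypothesis hG : is_groupoid G.
Local Notation d := (gdom G).
Local Notation r := (gcod G).
Local Notation inv := (ginv G).
Local Notation mul := (gmul G).

Lemma g_dd x : d (d x) = d x. Proof. by case: hG => h _ _ _ _; case: (h x). Qed.
Lemma g_rd x : r (d x) = d x. Proof. by case: hG => h _ _ _ _; case: (h x). Qed.
Lemma g_dr x : d (r x) = r x. Proof. by case: hG => _ h _ _ _; case: (h x). Qed.
Lemma g_rr x : r (r x) = r x. Proof. by case: hG => _ h _ _ _; case: (h x). Qed.
Lemma g_dmul x y : d x = r y -> d (mul x y) = d y.
Proof. by case: hG => _ _ h _ _ /h []. Qed.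
Lemma g_rmul x y : d x = r y -> r (mul x y) = r x.
Proof. by case: hG => _ _ h _ _ /h []. Qed.
Lemma g_assoc x y z : d x = r y -> d y = r z -> mul (mul x y) z = mul x (mul y z).
Proof. by case: hG => _ _ _ h _; apply: h. Qed.
Lemma g_rmulx x : mul (r x) x = x. Proof. by case: hG => _ _ _ _ [h _]; case: (h x). Qed.
Lemma g_mulxd x : mul x (d x) = x. Proof. by case: hG => _ _ _ _ [h _]; case: (h x). Qed.
Lemma g_dinv x : d (inv x) = r x. Proof. by case: hG => _ _ _ _ [_ h]; case: (h x). Qed.
Lemma g_rinv x : r (inv x) = d x. Proof. by case: hG => _ _ _ _ [_ h]; case: (h x). Qed.
Lemma g_invx x : mul (inv x) x = d x. Proof. by case: hG => _ _ _ _ [_ h]; case: (h x). Qed.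
Lemma g_xinv x : mul x (inv x) = r x. Proof. by case: hG => _ _ _ _ [_ h]; case: (h x). Qed.

Lemma g_invK x : inv (inv x) = x.
Proof.
rewrite -[LHS]g_mulxd g_dinv g_rinv -g_invx -g_assoc.
- by rewrite g_invx g_dinv g_rmulx.
- by rewrite g_dinv g_rinv.
- by rewrite g_dinv.
Qed.

Definition finj (f : T -> T) (A : set T) := forall x y, A x -> A y -> f x = f y -> x = y.
Definition bis (A : set T) := finj d A /\ finj r A.

Lemma bis_sub A B : A `<=` B -> bis B -> bis A.
Proof. by move=> AB [h1 h2]; split=> x y /AB Ax /AB Ay; [apply: h1|apply: h2]. Qed.

Lemma bisP A : partial_bisection G A <-> bis A.
Proof.
split.
- move=> [h1 h2]; split.
  + move=> x y Ax Ay dxy.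
    have e : gidents G (mul x (inv y)).
      apply: h2; exists x, (inv y); split => //; first by exists y.
      by rewrite g_rinv.
    have e2 : mul x (inv y) = r y.
      by rewrite -e g_dmul ?g_dinv // g_rinv.
    rewrite -[x]g_mulxd dxy -g_invx -g_assoc ?g_rinv ?g_dinv //.
    by rewrite e2 g_rmulx.
  + move=> x y Ax Ay rxy.
    have e : gidents G (mul (inv x) y).
      apply: h1; exists (inv x), y; split => //; first by exists x.
      by rewrite g_dinv.
    have e2 : mul (inv x) y = d y.
      by rewrite -e g_dmul // g_dinv.
    have dxy : d x = d y.
      by rewrite -g_rinv -(g_rmul (x:=inv x) (y:=y)) ?g_dinv // e2 g_rd.
    rewrite -[y]g_rmulx -rxy -g_xinv g_assoc ?g_rinv ?g_dinv //.
    by rewrite e2 -dxy g_mulxd.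
- move=> [h1 h2]; split.
  + move=> z [a [b [[a' Aa' <-] Bb dab ->]]].
    rewrite g_dinv in dab.
    have -> : a' = b by apply: h2.
    by rewrite g_invx /gidents /= g_dd.
  + move=> z [a [b [Aa [b' Bb' <-] dab ->]]].
    rewrite g_rinv in dab.
    have -> : a = b' by apply: h1.
    by rewrite g_xinv /gidents /= g_dr.
Qed.

Lemma KBle_sub C D : partial_bisection G C -> KBle G C D -> C `<=` D.
Proof.
move=> [h1 _] E; rewrite E => z [a [e [Da He dae ->]]].
have ide : d e = e by apply: h1.
have -> : e = d a by rewrite dae -[in LHS]ide -[in RHS]ide g_rd.
by rewrite g_mulxd.
Qed.

Lemma sub_KBle C D : bis C -> bis D -> C `<=` D -> KBle G C D.
Proof.
move=> [c1 c2] [d1 d2] CD; rewrite /KBle eqEsubset; split.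
- move=> c Cc; exists c, (d c); split.
  + exact: CD.
  + exists (inv c), c; split => //; first by exists c.
    by rewrite g_dinv. by rewrite g_invx.
  + by rewrite g_rd.
  + by rewrite g_mulxd.
- move=> z [a [e [Da [u [v [[c Cc <-] Cv dcv ->]] dae ->]]]].
  rewrite g_dinv in dcv; have cv : c = v by apply: c2.
  subst v; rewrite g_invx in dae *.
  rewrite g_rd in dae.
  have ac : a = c by apply: d1 => //; apply: CD.
  by subst a; rewrite g_mulxd.
Qed.

End Alg.


Lemma open_in_nbhs (T : topologicalType) (O S : set T) (y : T) :
  open O -> O y -> O `<=` S -> nbhs y S.
Proof.
move=> oO Oy OS; apply: (filterS OS); apply: open_nbhs_nbhs; split => //.
Qed.

Lemma openP (T : topologicalType) (S : set T) :
  (forall y, S y -> exists O, [/\ open O, O y & O `<=` S]) -> open S.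
Proof.
move=> h; rewrite openE => y Sy; have [O [oO Oy OS]] := h y Sy.
exact: open_in_nbhs oO Oy OS.
Qed.

Lemma compact_section (T S : topologicalType) (f : T -> S) (V : set T) (E : set S) :
  open V -> (forall x y, V x -> V y -> f x = f y -> x = y) ->
  (forall N, open N -> N `<=` V -> open (f @` N)) ->
  compact E -> E `<=` f @` V -> compact (V `&` f @^-1` E).
Proof.
move=> oV finj fop cE EV F PF FVE.
have FE : (f @ F) E.
  by apply: (@filterS _ F _ (V `&` f @^-1` E)) => // x [].
have := cE (f @ F) (fmap_proper_filter f PF) FE.
move=> [e [Ee cle]].
have [x Vx fxe] := EV e Ee.
exists x; split; first by split => //; rewrite /preimage /= fxe.
move=> A B FA nB.
pose N' := B° `&` V.
have oN' : open N' by apply: openI => //; exact: open_interior.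
have N'x : N' x by split => //; apply: nbhs_singleton; apply: nbhs_interior.
have nfN : nbhs e (f @` N').
  by apply: (open_in_nbhs (fop _ oN' (@subIsetr _ _ _))) => //; rewrite -fxe; exists x.
pose A' := A `&` (V `&` f @^-1` E).
have FA' : (f @ F) (f @` A').
  by apply: (@filterS _ F _ A' _ _ (filterI FA FVE)) => z Az; exists z.
have [y [[a A'a fay] [n N'n fny]]] := cle _ _ FA' nfN.
have an : a = n by apply: finj; [case: A'a => _ []|case: N'n|rewrite fay fny].
subst n; exists a; split; first by case: A'a.
by case: N'n => /interior_subset.
Qed.


Section Topo.
Variables (T : topologicalType) (G : gpd_ops T).
Hypothesis hB : is_boolean_groupoid G.
Local Notation d := (gdom G).
Local Notation r := (gcod G).
Local Notation inv := (ginv G).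
Local Notation mul := (gmul G).
Local Notation Go := (gidents G).
Local Notation X := (subspace (gidents G)).

Lemma hG : is_groupoid G. Proof. by case: hB => [[[]]]. Qed.
Lemma inv_cont : continuous inv. Proof. by case: hB => [[[]]]. Qed.
Lemma d_lh : local_homeomorphism d. Proof. by case: hB => [[]]. Qed.

Lemma d_cont : continuous d.
Proof.
move=> x; have [U [oU Ux _ cU _]] := d_lh x.
by move: cU; rewrite continuous_open_subspace // => /(_ x); apply; rewrite inE.
Qed.

Lemma d_open N : open N -> open (d @` N).
Proof.
move=> oN; apply: openP => _ [x Nx <-]; have [U [oU Ux _ _ hop]] := d_lh x.
exists (d @` (N `&` U)); split.
- by apply: hop; [exact: openI|exact: subIsetr].
- by exists x.
- by move=> _ [y [Ny _] <-]; exists y.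
Qed.

Lemma r_eq : r = d \o inv.
Proof. by apply: funext => x /=; rewrite g_dinv //; exact: hG. Qed.

Lemma inv_img N : inv @` N = inv @^-1` N.
Proof.
apply: funext => y; apply: propext; split.
- by move=> [x Nx <-]; rewrite /preimage /= g_invK //; exact: hG.
- by move=> Ny; exists (inv y) => //; rewrite g_invK //; exact: hG.
Qed.

Lemma r_cont : continuous r.
Proof. by rewrite r_eq => x; apply: continuous_comp; [exact: inv_cont|exact: d_cont]. Qed.

Lemma r_open N : open N -> open (r @` N).
Proof.
move=> oN; have -> : r @` N = d @` (inv @` N).
  apply: funext => y; apply: propext; rewrite r_eq; split.
  - by move=> [x Nx <-]; exists (inv x) => //; exists x.
  - by move=> [_ [x Nx <-] <-]; exists x.
apply: d_open; rewrite inv_img.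
by move: inv_cont => /continuousP; apply.
Qed.

Lemma d_id x : Go (d x). Proof. by rewrite /gidents /= g_dd //; exact: hG. Qed.
Lemma r_id x : Go (r x). Proof. by rewrite /gidents /= g_dr //; exact: hG. Qed.

Lemma pre_closed (f : T -> T) (V : set T) : (forall x, Go (f x)) -> continuous f ->
  compact V -> closed (f @^-1` (f @` V)).
Proof.
move=> fid fc cV.
have cfV : compact (f @` V).
  apply: continuous_compact => //; exact: continuous_subspaceT.
have sub : f @` V `<=` Go by move=> _ [x _ <-].
have cX : compact (f @` V `&` Go : set X).
  by apply/compact_subspaceIP; rewrite setIidl.
have clX : closed (f @` V `&` Go : set X).
  apply: compact_closed => //; by case: hB.
move: clX => /closed_subspaceP [C clC CE].
rewrite -setIA setIid in CE.
have -> : f @^-1` (f @` V) = f @^-1` C.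
  apply: funext => x; apply: propext; split.
  - move=> h; have : (f @` V `&` Go) (f x) by split.
    by rewrite -CE => -[].
  - move=> h; have : (C `&` Go) (f x) by split.
    by rewrite CE => -[].
by move: fc => /continuous_closedP; apply.
Qed.

Lemma pre_open (f : T -> T) (V : set T) : continuous f ->
  (forall N, open N -> open (f @` N)) -> open V -> open (f @^-1` (f @` V)).
Proof. by move=> fc fo oV; move: fc => /continuousP; apply; apply: fo. Qed.

Lemma loc_bis O g : open O -> O g -> exists O', [/\ open O', O' g, O' `<=` O, bis G O' &
    (forall N, open N -> N `<=` O' -> open (d @` N))].
Proof.
move=> oO Og; have [U [oU Ug Uinj _ Uop]] := d_lh g.
have [U1 [oU1 U1g U1inj _ _]] := d_lh (inv g).
pose U1' := inv @^-1` U1.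
have oU1' : open U1' by move: inv_cont => /continuousP; apply.
exists (O `&` U `&` U1'); split.
- by apply: openI => //; apply: openI.
- by [].
- by move=> x [[]].
- split.
  + by move=> x y [[_ Ux] _] [[_ Uy] _]; apply: Uinj.
  + move=> x y [[_ _] Ux] [[_ _] Uy]; rewrite r_eq /= => e.
    have : inv x = inv y by apply: U1inj.
    by move=> /(congr1 inv); rewrite !g_invK //; exact: hG.
- by move=> N oN NO; apply: Uop => // x /NO [[]].
Qed.

Lemma kb_basis O g : open O -> O g -> exists V,
  [/\ compact V, open V, bis G V, V g & V `<=` O].
Proof.
move=> oO Og; have [O' [oO' O'g O'O bO' O'op]] := loc_bis oO Og.
have odO' : open (d @` O') by apply: O'op.
have [_ lc hd zd] := hB.
have [K nK [cK clK]] := lc (d g : X) I.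
have nK' : nbhs (d g : X) K.
  by move: nK; rewrite withinET.
pose U'' : set X := d @` O' `&` (@interior X K).
have oU'' : open U''.
  apply: openI; first exact: open_subspaceW.
  exact: open_interior.
have U''g : U'' (d g).
  split; first by exists g.
  exact: nK'.
have [E [[oE clE] Eg EU]] := zd (d g : X) U'' oU'' U''g.
have EGo : E `<=` Go by move=> y /EU [[x _ <-] _]; exact: d_id.
have cEX : compact (E : set X).
  apply: (subclosed_compact clE cK) => y /EU [_] /interior_subset; done.
have cE : @compact T E.
  have : compact (E `&` Go : set X) by rewrite setIidl.
  by move/compact_subspaceIP; rewrite setIidl.
have oET : @open T E.
  move: oE => /open_subspaceP [W oW WE].
  have -> : E = W `&` d @` O'.
    apply: funext => y; apply: propext; split.
    - move=> Ey; have : (E `&` Go) y by split => //; exact: EGo.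
      by rewrite -WE => -[Wy _]; split => //; have [] := EU y Ey.
    - move=> [Wy dy]; have : (W `&` Go) y.
        by split => //; case: dy => x _ <-; exact: d_id.
      by rewrite WE => -[].
  by apply: openI.
exists (O' `&` d @^-1` E); split.
- apply: compact_section => //.
  + by case: bO'.
  + by move=> y Ey; have [] := EU y Ey.
- apply: openI => //; by move: d_cont => /continuousP; apply.
- by apply: bis_sub bO'; exact: subIsetl.
- by split.
- by move=> x [/O'O].
Qed.

End Topo.


Section Lists.
Variable T : topologicalType.

Fixpoint unionl (s : seq (set T)) : set T :=
  if s is V :: s' then V `|` unionl s' else set0.
Fixpoint allS (P : set T -> Prop) (s : seq (set T)) : Prop :=
  if s is V :: s' then P V /\ allS P s' else True.

Lemma allS_impl (P Q : set T -> Prop) s : (forall V, P V -> Q V) -> allS P s -> allS Q s.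
Proof. by move=> PQ; elim: s => //= V s IH [/PQ ? /IH]. Qed.

Lemma unionl_compact s : allS compact s -> compact (unionl s).
Proof. elim: s => [_|V s IH [cV /IH cs]] /=; [exact: compact0|exact: compactU]. Qed.

Lemma unionl_open s : allS open s -> open (unionl s).
Proof. elim: s => [_|V s IH [cV /IH cs]] /=; [exact: open0|exact: openU]. Qed.

Lemma unionl_sub s W : allS (fun V => V `<=` W) s -> unionl s `<=` W.
Proof. elim: s => [_|V s IH [VW /IH sW]] /= x //; by case=> [/VW|/sW]. Qed.

Lemma unionl_mapD s Z : unionl (map (fun A => A `\` Z) s) = unionl s `\` Z.
Proof. by elim: s => [|V s IH] /=; rewrite ?set0D // IH setDUl. Qed.

Lemma unionl_cat s1 s2 : unionl (s1 ++ s2) = unionl s1 `|` unionl s2.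
Proof. by elim: s1 => [|V s IH] /=; rewrite ?set0U // IH setUA. Qed.

Lemma fincover (K : set T) (P : set T -> Prop) : compact K ->
  (forall x, K x -> exists V, [/\ P V, open V & V x]) ->
  exists s, allS P s /\ K `<=` unionl s.
Proof.
move=> cK H.
pose f (x : T) : set T := match pselect (K x) with
  | left h => projT1 (cid (H x h)) | right _ => set0 end.
have fP x : K x -> [/\ P (f x), open (f x) & f x x].
  by move=> Kx; rewrite /f; case: pselect => // h; case: cid => V /=.
have hl : forall l : seq T, (forall i, i \in l -> K i) ->
    allS P (map f l) /\ (forall i, i \in l -> f i `<=` unionl (map f l)).
  elim=> [|i l IH] hl /=; first by split.
  have Ki : K i by apply: hl; rewrite inE eqxx.
  have hl' : forall j, j \in l -> K j by move=> j jl; apply: hl; rewrite inE jl orbT.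
  have [IH1 IH2] := IH hl'.
  split; first by split => //; have [] := fP i Ki.
  move=> j; rewrite inE => /orP [/eqP -> | jl] y fy; [by left|right].
  exact: IH2 jl _ fy.
apply: contrapT => nfin.
pose D := [set l : seq T | forall i, i \in l -> K i].
pose B := fun l : seq T => K `\` unionl (map f l).
have FF : Filter (filter_from D B).
  apply: filter_from_filter; first by exists [::].
  move=> l1 l2 D1 D2; exists (l1 ++ l2).
    by move=> i; rewrite mem_cat => /orP [/D1|/D2].
  by move=> x [Kx]; rewrite map_cat unionl_cat => /not_orP [n1 n2].
have PF : ProperFilter (filter_from D B).
  apply: filter_from_proper => l Dl; apply/set0P/negP => /eqP B0.
  apply: nfin; exists (map f l); split; first by case: (hl l Dl).
  move=> x Kx; apply: contrapT => nx.
  have : B l x by split.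
  by rewrite B0.
have FK : filter_from D B K.
  by exists [::]; [move=> i; rewrite in_nil | move=> x []].
have [p [Kp clp]] := cK _ PF FK.
have [Pp op fpp] := fP p Kp.
have Dp : D [:: p] by move=> i; rewrite inE => /eqP ->.
have FBp : filter_from D B (B [:: p]) by exists [:: p].
have [y [By fy]] := clp (B [:: p]) (f p) FBp (open_in_nbhs op fpp (fun x h => h)).
by case: By => _ /=; apply; left.
Qed.

End Lists.


Lemma allS_map (T : topologicalType) (P Q : set T -> Prop) (g : set T -> set T) l :
  (forall A, P A -> Q (g A)) -> allS P l -> allS Q (map g l).
Proof. by move=> h; elim: l => //= A l IH [/h ? /IH]. Qed.

Section Refine.
Variables (T : topologicalType) (G : gpd_ops T).
Hypothesis hB : is_boolean_groupoid G.
Local Notation Go := (gidents G).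

Definition good (W V : set T) := [/\ compact V, open V, bis G V & V `<=` W].

Variable f : T -> T.
Hypotheses (fid : forall x, Go (f x)) (fc : continuous f)
  (fo : forall N, open N -> open (f @` N)) (fb : forall V, bis G V -> finj f V).

Fixpoint refine (s : seq (set T)) : seq (set T) :=
  if s is V :: s' then V :: map (fun A => A `\` f @^-1` (f @` V)) (refine s')
  else [::].

Lemma refine_cons V s :
  unionl (refine (V :: s)) = V `|` (unionl (refine s) `\` f @^-1` (f @` V)).
Proof. by rewrite /= unionl_mapD. Qed.

Lemma refine_good W s : allS (good W) s -> allS (good W) (refine s).
Proof.
elim: s => //= V s IH [gV /IH gs]; split => //.
apply: allS_map gs => A [cA oA bA AW]; case: gV => cV oV _ _; split.
- by apply: compact_closedI => //; rewrite closedC; exact: pre_open.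
- by apply: openI => //; rewrite openC; exact: (pre_closed hB).
- by apply: bis_sub bA => x [].
- by move=> x [/AW].
Qed.

Lemma refine_sub s : unionl (refine s) `<=` unionl s.
Proof.
elim: s => //= V s IH; rewrite unionl_mapD => x [Vx|[/IH sx _]]; by [left|right].
Qed.

Lemma refine_inj W s : allS (good W) s -> finj f (unionl (refine s)).
Proof.
elim: s => [_ x y []|V s IH [[_ _ bV _] /IH hs]].
rewrite refine_cons => x y [Vx|[Rx Zx]] [Vy|[Ry Zy]] fxy.
- exact: fb bV x y Vx Vy fxy.
- by exfalso; apply: Zy; exists x.
- by exfalso; apply: Zx; exists y.
- exact: hs.
Qed.

Lemma refine_cov s x : unionl s x ->
  (forall v, unionl s v -> f v = f x -> v = x) -> unionl (refine s) x.
Proof.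
elim: s => [[]|V s IH] /= [Vx|sx] h; rewrite unionl_mapD; first by left.
have [[v Vv fvx]|nZ] := pselect ((f @` V) (f x)).
  by left; rewrite -(h v (or_introl Vv) fvx).
right; split => //; apply: IH => // v sv; apply: h; by right.
Qed.

End Refine.


Unset Implicit Arguments.

Lemma finj_sub (T : Type) (f : T -> T) (A B : set T) : A `<=` B -> finj f B -> finj f A.
Proof. by move=> AB h x y /AB Ax /AB Ay; apply: h. Qed.

Theorem lemma5p5 (T U : topologicalType) (G : gpd_ops T) (H : gpd_ops U)
    (theta : U -> T) :
  is_boolean_groupoid G -> is_boolean_groupoid H ->
  is_covering_functor H G theta -> continuous theta -> coherent theta ->
  gpd_invariant G (range theta) -> homeo_onto_image theta ->
  let phi := fun A : set T => theta @^-1` A in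
  [/\ KB_morphism G H phi, KB_surjective G H phi & KB_weakly_meet_preserving G H phi].
Proof.
move=> hBG hBH [[fd fr fm] covs] thc coh hinv [thinj _ thop] phi.
have hGG := hG hBG; have hGH := hG hBH.
have phiKB : forall A, inKB G A -> inKB H (phi A).
  move=> A [cA oA pbA]; have [cP oP] := coh A (conj cA oA).
  split => //; apply/(bisP hGH); have [bd br] := (bisP hGG A).1 pbA.
  split => x y Ax Ay e; apply: thinj.
  - by apply: bd => //; rewrite -!fd e.
  - by apply: br => //; rewrite -!fr e.
split.
- split => //.
  + move=> A B _ _; rewrite eqEsubset; split.
    * move=> z [a [b [Aa Bb dab e]]].
      have e0 : gidents H (gdom H z) by rewrite /gidents /= g_dd.
      have [_ surj] := covs _ e0.
      have [h2 [dh2 th2]] : exists h, gdom H h = gdom H z /\ theta h = b.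
        apply: surj; rewrite fd e g_dmul //.
      have e1 : gidents H (gcod H h2) by rewrite /gidents /= g_dr.
      have [_ surj1] := covs _ e1.
      have [h1 [dh1 th1]] : exists h, gdom H h = gcod H h2 /\ theta h = a.
        by apply: surj1; rewrite fr th2.
      exists h1, h2; split.
      - by rewrite /phi /preimage /= th1.
      - by rewrite /phi /preimage /= th2.
      - by [].
      - by apply: thinj; rewrite fm // th1 th2.
    * move=> z [h1 [h2 [Ah1 Bh2 dh ->]]].
      rewrite /phi /preimage /= fm //; exists (theta h1), (theta h2); split => //.
      by rewrite -fd -fr dh.
- move=> B [cB oB pbB]; have [bBd bBr] := (bisP hGH B).1 pbB.
  pose K := theta @` B.
  have cK : compact K by rewrite /K; apply: continuous_compact => //; exact: continuous_subspaceT.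
  have [W [oW WE]] := thop B oB.
  have KW : K `<=` W.
    move=> k Kk; suff : (W `&` range theta) k by case.
    by rewrite -WE; exact: Kk.
  have bK : bis G K.
    split => _ _ [x Bx <-] [y By <-] e; congr theta.
    - by apply: bBd => //; apply: thinj; rewrite !fd.
    - by apply: bBr => //; apply: thinj; rewrite !fr.
  have WrK : forall v, W v -> range theta v -> K v.
    by move=> v Wv rv; rewrite /K WE.
  have invd : forall k v, K k -> W v -> gdom G v = gdom G k -> v = k.
    move=> k v Kk Wv e; apply: bK.1 => //; apply: WrK => //.
    apply: (hinv k v); last by case: Kk => x _ <-; exists x.
    by exists (gdom G k); rewrite g_dd // g_rd // e.
  have invr : forall k v, K k -> W v -> gcod G v = gcod G k -> v = k.
    move=> k v Kk Wv e; apply: bK.2 => //; apply: WrK => //.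
    apply: (hinv k v); last by case: Kk => x _ <-; exists x.
    exists (gmul G (ginv G v) k); rewrite g_dmul ?g_rmul ?g_rinv ?g_dinv //.
  have [s [gs Ks]] : exists s, allS (good G W) s /\ K `<=` unionl s.
    apply: fincover => // k Kk.
    have [V [cV oV bV Vk VW]] := kb_basis hBG oW (KW k Kk).
    by exists V.
  pose s1 := refine (gdom G) s.
  pose s2 := refine (gcod G) s1.
  have gs1 : allS (good G W) s1.
    apply: refine_good => //; [exact: d_id|exact: d_cont|exact: d_open].
  have gs2 : allS (good G W) s2.
    apply: refine_good => //; [exact: r_id|exact: r_cont|exact: r_open].
  have s1d : finj (gdom G) (unionl s1).
    by apply: refine_inj gs => V [].
  have s2r : finj (gcod G) (unionl s2).
    by apply: refine_inj gs1 => V [].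
  have s21 : unionl s2 `<=` unionl s1 by apply: refine_sub.
  have s10 : unionl s1 `<=` unionl s by apply: refine_sub.
  have sW : unionl s `<=` W by apply: unionl_sub; apply: allS_impl gs => V [].
  have KA : K `<=` unionl s2.
    move=> k Kk; apply: refine_cov.
      apply: refine_cov; first exact: Ks.
      by move=> v /sW Wv e; apply: invd.
    by move=> v /s10 /sW Wv e; apply: invr.
  exists (unionl s2); split; first split.
  + by apply: unionl_compact; apply: allS_impl gs2 => V [].
  + by apply: unionl_open; apply: allS_impl gs2 => V [].
  + by apply/(bisP hGG); split => //; apply: finj_sub s21 s1d.
  + apply: funext => h; apply: propext; split.
    * move=> Ah; have : K (theta h) by apply: WrK; [apply: sW; apply: s10; apply: s21|exists h].
      by case=> b Bb /thinj <-.
    * by move=> Bh; apply: KA; exists h.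
- move=> A B C [cA oA pbA] [cB oB pbB] [cC oC pbC] leA leB.
  have bA := (bisP hGG A).1 pbA.
  have bC := (bisP hGH C).1 pbC.
  have CA := KBle_sub hGH pbC leA.
  have CB := KBle_sub hGH pbC leB.
  pose K := theta @` C.
  have cK : compact K by rewrite /K; apply: continuous_compact => //; exact: continuous_subspaceT.
  have oW : open (A `&` B) by apply: openI.
  have [s [gs Ks]] : exists s, allS (good G (A `&` B)) s /\ K `<=` unionl s.
    apply: fincover => // _ [c Cc <-].
    have [V [cV oV bV Vk VW]] := kb_basis hBG oW (conj (CA c Cc) (CB c Cc)).
    by exists V.
  have sW : unionl s `<=` A `&` B by apply: unionl_sub; apply: allS_impl gs => V [].
  have bD : bis G (unionl s) by apply: bis_sub bA => x /sW [].
  have DKB : inKB G (unionl s).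
    split.
    + by apply: unionl_compact; apply: allS_impl gs => V [].
    + by apply: unionl_open; apply: allS_impl gs => V [].
    + by apply/(bisP hGG).
  exists (unionl s); split => //.
  + by apply: sub_KBle => // x /sW [].
  + apply: sub_KBle => //; first by apply/(bisP hGG); case: pbB.
    by move=> x /sW [].
  + have [_ _ pbP] := phiKB _ DKB.
    apply: sub_KBle => //; first by apply/(bisP hGH).
    by move=> c Cc; apply: Ks; exists c.
Qed.
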